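(* For every $f\in\mathbb Z[x_1,\dots,x_n]$, $$\langle f\rangle_n=\mathsf T_{1,2}(\mathsf T_{1,3}+\mathsf T_{2,3})\cdots(\mathsf T_{1,n}+\cdots+\mathsf T_{n-1,n})f.$$ In particular, if $f$ is homogeneous of degree $n-1$, then $\langle f\rangle_n=T_1(T_1+T_2)\cdots(T_1+\cdots+T_{n-1})f$.
   Context: Divided symmetrization: $\langle f\rangle_n=\sum_{\sigma\in S_n}\frac{f(x_{\sigma(1)},\dots,x_{\sigma(n)})}{(x_{\sigma(1)}-x_{\sigma(2)})\cdots(x_{\sigma(n-1)}-x_{\sigma(n)})}$. For $1\le i\le m\le n$, $\mathsf R_{i,m}$ acts on $\mathbb Z[x_1,\dots,x_n]$ by $f\mapsto f(x_1,\dots,x_{i-1},x_m,x_i,\dots,x_{m-1},x_{m+1},\dots,x_n)$, and for $1\le i\le m-1$, $\mathsf T_{i,m}f=\frac{\mathsf R_{i+1,m}f-\mathsf R_{i,m}f}{x_i-x_m}$ (a polynomial); composition is applied right to left. $R_if=f(x_1,\dots,x_{i-1},0,x_i,\dots)$, $T_if=\frac1{x_i}(R_{i+1}f-R_if)$. *)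

(* Defs.v *)
From HB Require Import structures.
From mathcomp Require Import all_boot all_algebra.
From mathcomp Require Import fingroup perm fraction mpoly.
From Stdlib Require Import ClassicalEpsilon.
Set Implicit Arguments. Unset Strict Implicit. Unset Printing Implicit Defensive.
Import GRing.Theory.
Local Open Scope ring_scope.

Notation "x %:F" := (@FracField.tofrac _ x).

(* The variable x_p of Z[x_1,...,x_n], 1-based; 0 if p is out of range. *)
Definition xv (n : nat) (p : nat) : {mpoly int[n]} :=
  if (0 < p)%N then (if (insub p.-1 : option 'I_n) is Some i
                 then 'X_i else 0)
  else 0.

Definition substP (n : nat) (g : nat -> {mpoly int[n]}) (f : {mpoly int[n]})
  : {mpoly int[n]} := f \mPo [tuple g (val j).+1 | j < n].

(* Exact division: the (unique, when q != 0) g with g * q = p, if it exists. *)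
Definition exdiv (n : nat) (p q : {mpoly int[n]}) : {mpoly int[n]} :=
  epsilon (inhabits 0) (fun g => g * q = p).

(* R_{i,m} f = f(x_1,...,x_{i-1},x_m,x_i,...,x_{m-1},x_{m+1},...,x_n) *)
Definition Rop (n i m : nat) (f : {mpoly int[n]}) : {mpoly int[n]} :=
  substP (fun p => if (p < i)%N then xv n p
                   else if (p == i)%N then xv n m
                   else if (p <= m)%N then xv n p.-1
                   else xv n p) f.

Definition Top (n i m : nat) (f : {mpoly int[n]}) : {mpoly int[n]} :=
  exdiv (Rop (i.+1) m f - Rop i m f) (xv n i - xv n m).

Definition Tsum (n m : nat) (f : {mpoly int[n]}) : {mpoly int[n]} :=
  \sum_(1 <= i < m) Top i m f.

(* T_{1,2}(T_{1,3}+T_{2,3}) ... (T_{1,n}+...+T_{n-1,n}) f, applied right to left *)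
Definition Tchain (n : nat) (f : {mpoly int[n]}) : {mpoly int[n]} :=
  foldr (fun m g => Tsum m g) f (iota 2 n.-1).

Definition R0op (n i : nat) (f : {mpoly int[n]}) : {mpoly int[n]} :=
  substP (fun p => if (p < i)%N then xv n p
                   else if (p == i)%N then 0
                   else xv n p.-1) f.

Definition T0op (n i : nat) (f : {mpoly int[n]}) : {mpoly int[n]} :=
  exdiv (R0op (i.+1) f - R0op i f) (xv n i).

Definition T0sum (n k : nat) (f : {mpoly int[n]}) : {mpoly int[n]} :=
  \sum_(1 <= i < k.+1) T0op i f.

(* T_1 (T_1+T_2) ... (T_1+...+T_{n-1}) f, applied right to left *)
Definition T0chain (n : nat) (f : {mpoly int[n]}) : {mpoly int[n]} :=
  foldr (fun k g => T0sum k g) f (iota 1 n.-1).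

(* x_{s(k)} (0-based position k), 0 if out of range *)
Definition xs (n : nat) (s : 'S_n) (k : nat) : {mpoly int[n]} :=
  if (insub k : option 'I_n) is Some i then 'X_(s i) else 0.

(* Divided symmetrization, as an element of the fraction field of Z[x_1..x_n]:
   sum_s f(x_{s 1},...,x_{s n}) / ((x_{s 1}-x_{s 2}) ... (x_{s(n-1)}-x_{s n})) *)
Definition dsym (n : nat) (f : {mpoly int[n]}) : {fraction {mpoly int[n]}} :=
  \sum_(s : 'S_n)
     (f \mPo [tuple 'X_(s j) | j < n])%:F
     / (\prod_(0 <= k < n.-1) (xs s k - xs s k.+1))%:F.

(* Main.v *)
Require Import Defs.
From HB Require Import structures.
From mathcomp Require Import all_boot all_algebra.
From mathcomp Require Import fingroup perm fraction mpoly.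
From Stdlib Require Import ClassicalEpsilon.
From mathcomp Require Import zify ring.
Set Implicit Arguments. Unset Strict Implicit. Unset Printing Implicit Defensive.
Import GRing.Theory.
Local Open Scope ring_scope.

Lemma comp_mpolyA n k l (R : comRingType) (p : {mpoly R[n]})
   (a : n.-tuple {mpoly R[k]}) (b : k.-tuple {mpoly R[l]}) :
  (p \mPo a) \mPo b = p \mPo [tuple (tnth a i \mPo b) | i < n].
Proof.
rewrite (comp_mpolyEX p a) (comp_mpolyEX p) raddf_sum /=.
apply: eq_bigr => m _; rewrite comp_mpolyZ !comp_mpolyX rmorph_prod /=.
congr (_ *: _); apply: eq_bigr => i _.
by rewrite rmorphXn /= tnth_mktuple.
Qed.

Section Sub.
Context (n : nat).
Local Notation P := {mpoly int[n]}.

Lemma xv_ord (j : 'I_n) : xv n (val j).+1 = 'X_j.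
Proof.
rewrite /xv /=; case: insubP => [i _ /val_inj -> //|]; by rewrite ltn_ord.
Qed.

Lemma xv_out p : (p == 0)%N || (n < p)%N -> xv n p = 0.
Proof.
rewrite /xv; case: p => [//|p] /= lt; case: insubP => // i hi.
by move: lt; rewrite ltnS leqNgt hi.
Qed.

Lemma xv0 : xv n 0 = 0. Proof. exact: xv_out. Qed.

Lemma substP_ext g h (f : P) :
  (forall p, (0 < p <= n)%N -> g p = h p) -> substP g f = substP h f.
Proof.
move=> e; rewrite /substP; congr (_ \mPo _).
by apply: eq_from_tnth => j; rewrite !tnth_mktuple e //= ltn_ord.
Qed.

Lemma substP_xv h p : (0 < p <= n)%N -> substP h (xv n p) = h p.
Proof.
case: p => // p /= lt; have -> : xv n p.+1 = 'X_(Ordinal lt) by rewrite -xv_ord.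
by rewrite /substP comp_mpolyXU -tnth_nth tnth_mktuple.
Qed.

Lemma substP_comp g h (f : P) :
  substP h (substP g f) = substP (fun p => substP h (g p)) f.
Proof.
rewrite /substP comp_mpolyA; congr (_ \mPo _).
by apply: eq_from_tnth => j; rewrite !tnth_mktuple.
Qed.

Lemma substP_id (f : P) : substP (xv n) f = f.
Proof.
rewrite /substP -[RHS]comp_mpoly_id; congr (_ \mPo _).
by apply: eq_from_tnth => j; rewrite !tnth_mktuple xv_ord.
Qed.

Definition sub (i : nat -> nat) (f : P) : P := substP (fun p => xv n (i p)) f.

Lemma sub_comp (k i : nat -> nat) (f : P) : k 0%N = 0%N ->
  (forall p, (0 < p <= n)%N -> (i p <= n)%N) ->
  sub k (sub i f) = sub (fun p => k (i p)) f.
Proof.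
move=> k0 hi; rewrite /sub substP_comp; apply: substP_ext => p hp.
have := hi p hp; case: (i p) => [|q] hq.
  by rewrite k0 xv0 /substP comp_mpoly0.
by rewrite substP_xv.
Qed.

Lemma sub_xv (k : nat -> nat) p : (0 < p <= n)%N -> sub k (xv n p) = xv n (k p).
Proof. by move=> hp; rewrite /sub substP_xv. Qed.

Lemma sub_ext (k i : nat -> nat) (f : P) :
  (forall p, (0 < p <= n)%N -> k p = i p) -> sub k f = sub i f.
Proof. by move=> e; apply: substP_ext => p hp; rewrite e. Qed.

Lemma sub_id (f : P) : sub id f = f.
Proof. exact: substP_id. Qed.

Lemma subM k (f g : P) : sub k (f * g) = sub k f * sub k g.
Proof. exact: rmorphM. Qed.
Lemma subB k (f g : P) : sub k (f - g) = sub k f - sub k g.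
Proof. exact: rmorphB. Qed.
Lemma subD k (f g : P) : sub k (f + g) = sub k f + sub k g.
Proof. exact: rmorphD. Qed.
Lemma sub_sum k I r (Q : pred I) (F : I -> P) :
  sub k (\sum_(i <- r | Q i) F i) = \sum_(i <- r | Q i) sub k (F i).
Proof. exact: raddf_sum. Qed.
Lemma subC k c : sub k (c%:MP) = c%:MP.
Proof. exact: comp_mpolyC. Qed.

End Sub.
Definition rho (i m p : nat) : nat :=
  if (p < i)%N then p else if p == i then m else if (p <= m)%N then p.-1 else p.
Definition zeta (i p : nat) : nat :=
  if (p < i)%N then p else if p == i then 0%N else p.-1.

Definition dv (R : comRingType) (d x : R) := exists c, x = c * d.

Lemma dv0 (R : comRingType) (d : R) : dv d 0.
Proof. by exists 0; rewrite mul0r. Qed.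
Lemma dvD (R : comRingType) (d x y : R) : dv d x -> dv d y -> dv d (x + y).
Proof. by move=> [a ->] [b ->]; exists (a + b); rewrite mulrDl. Qed.
Lemma dvMl (R : comRingType) (d x y : R) : dv d y -> dv d (x * y).
Proof. by move=> [a ->]; exists (x * a); rewrite mulrA. Qed.
Lemma dvMdiff (R : comRingType) (d x1 x2 y1 y2 : R) :
  dv d (x1 - x2) -> dv d (y1 - y2) -> dv d (x1 * y1 - x2 * y2).
Proof.
move=> h1 h2; have -> : x1 * y1 - x2 * y2 = x1 * (y1 - y2) + y2 * (x1 - x2).
  by ring.
by apply: dvD; apply: dvMl.
Qed.
Lemma dvXdiff (R : comRingType) (d x y : R) e :
  dv d (x - y) -> dv d (x ^+ e - y ^+ e).
Proof.
move=> h; elim: e => [|e ih]; first by rewrite !expr0 subrr; apply: dv0.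
by rewrite !exprS; apply: dvMdiff.
Qed.

Lemma dv_comp (R : comRingType) k l (d : {mpoly R[l]}) (p : {mpoly R[k]})
  (a b : k.-tuple {mpoly R[l]}) :
  (forall i, dv d (tnth a i - tnth b i)) -> dv d ((p \mPo a) - (p \mPo b)).
Proof.
move=> h; rewrite !comp_mpolyE.
apply: (big_ind2 (fun x y => dv d (x - y))); first by rewrite subrr; apply: dv0.
  move=> x1 x2 y1 y2 h1 h2.
  have -> : x1 + y1 - (x2 + y2) = (x1 - x2) + (y1 - y2) by ring.
  by apply: dvD.
move=> m _; rewrite -scalerBr -!mul_mpolyC; apply: dvMl.
apply: (big_ind2 (fun x y => dv d (x - y))); first by rewrite subrr; apply: dv0.
  by move=> x1 x2 y1 y2; apply: dvMdiff.
by move=> i _; apply: dvXdiff.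
Qed.

Section SubB.
Context (n : nat).
Local Notation P := {mpoly int[n]}.

Lemma Rop_sub i m (f : P) : Rop i m f = sub (rho i m) f.
Proof. by apply: substP_ext => p _; rewrite /rho; do ![case: ifP]. Qed.

Lemma R0op_sub i (f : P) : R0op i f = sub (zeta i) f.
Proof. by apply: substP_ext => p _; rewrite /zeta; do ![case: ifP]; rewrite ?xv0. Qed.

Lemma Top_spec i m (f : P) : (0 < i)%N -> (i < m)%N -> (m <= n)%N ->
  Top i m f * (xv n i - xv n m) = Rop i.+1 m f - Rop i m f.
Proof.
move=> i0 im mn; rewrite /Top /exdiv.
apply: (epsilon_spec (inhabits 0) (fun g => g * _ = _)).
suff [c ->] : dv (xv n i - xv n m) (Rop i.+1 m f - Rop i m f) by exists c.
rewrite !Rop_sub; apply: dv_comp => j; rewrite !tnth_mktuple.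
set p := (val j).+1.
have [pi|pi] := eqVneq p i.
  have -> : rho i.+1 m p = i by rewrite /rho pi ltnSn.
  have -> : rho i m p = m by rewrite /rho pi ltnn eqxx.
  by exists 1; rewrite mul1r.
have [pi1|pi1] := eqVneq p i.+1.
  have -> : rho i.+1 m p = m by rewrite /rho pi1 ltnn eqxx.
  have -> : rho i m p = i by rewrite /rho pi1; do ![case: ifP]; lia.
  by exists (-1); rewrite mulN1r opprB.
have -> : rho i.+1 m p = rho i m p by rewrite /rho; do ![case: ifP]; lia.
by rewrite subrr; apply: dv0.
Qed.

End SubB.

Section FieldLemma.
Context (K : fieldType) (M : nat) (y F : nat -> K).
Hypothesis M0 : (0 < M)%N.
Hypothesis yinj : forall a b, (a <= M)%N -> (b <= M)%N -> a != b -> y a != y b.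

Local Definition t k := y k - y k.+1.
Local Definition bb i := (y i - y M)^-1.
Local Definition cc j := (if (0 < j)%N then bb j.-1 else 0) - (if (j < M)%N then bb j else 0).
Local Definition PP := \prod_(0 <= k < M.-1) t k.
Local Definition Q j := \prod_(0 <= k < M) (y (rho j M k) - y (rho j M k.+1)).

Lemma yneq a b : (a <= M)%N -> (b <= M)%N -> a != b -> y a - y b != 0.
Proof. by move=> ha hb hab; rewrite subr_eq0 yinj. Qed.

Lemma t_neq0 k : (k < M)%N -> t k != 0.
Proof. by move=> h; rewrite /t yneq //; [lia|lia]. Qed.

Lemma prod_t_neq0 a b : (b <= M)%N -> \prod_(a <= k < b) t k != 0.
Proof.
move=> hb; rewrite prodf_seq_neq0; apply/allP => k; rewrite mem_index_iota => /andP[_ hk].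
by apply: t_neq0; lia.
Qed.

Lemma PP_neq0 : PP != 0.
Proof. by apply: prod_t_neq0; lia. Qed.

Lemma Q_eq j : (j <= M)%N -> Q j = PP / cc j.
Proof.
move=> jM; rewrite /Q /PP /cc /bb.
have [j0|jpos] := posnP j.
  subst j; rewrite sub0r M0 invrN invrK.
  rewrite big_ltn //.
  have -> : rho 0 M 0 = M by [].
  have -> : rho 0 M 1 = 0%N by rewrite /rho /= M0.
  rewrite big_add1 /=.
  have -> : \prod_(0 <= i < M.-1) (y (rho 0 M i.+1) - y (rho 0 M i.+2)) = \prod_(0 <= k < M.-1) t k.
    apply: eq_big_nat => k hk; rewrite /t /rho /=.
    have -> : (k.+1 <= M)%N by lia.
    by have -> : (k.+2 <= M)%N by lia.
  by rewrite opprB mulrC.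

have [jM'|jltM] := eqVneq j M.
  subst j; rewrite ltnn subr0 invrK.
  have -> : M = (M.-1).+1 by lia.
  rewrite big_nat_recr //= -/(M.-1).+1 prednK //.
  have -> : \prod_(0 <= i < M.-1) (y (rho M M i) - y (rho M M i.+1)) = \prod_(0 <= k < M.-1) t k.
    apply: eq_big_nat => k hk; rewrite /t /rho.
    have -> : (k < M)%N by lia.
    by have -> : (k.+1 < M)%N by lia.
  congr (_ * _); rewrite /rho.
  have -> : (M.-1 < M)%N by lia.
  by rewrite ltnn eqxx.
have jlt : (j < M)%N by lia.
rewrite jlt.
rewrite (@big_cat_nat _ _ _ j.-1) //=; last by lia.
rewrite (@big_ltn _ _ _ j.-1); last by lia.
rewrite prednK // (@big_ltn _ _ _ j) //.
rewrite big_add1.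
rewrite (@big_cat_nat _ _ _ j.-1 0 M.-1) //=; last by lia.
rewrite (@big_ltn _ _ _ j.-1); last by lia.
rewrite prednK //.
have eA : \prod_(0 <= i < j.-1) (y (rho j M i) - y (rho j M i.+1)) = \prod_(0 <= k < j.-1) t k.
  apply: eq_big_nat => k hk; rewrite /t /rho.
  have -> : (k < j)%N by lia.
  by have -> : (k.+1 < j)%N by lia.
have eB : \prod_(j <= i < M.-1) (y (rho j M i.+1) - y (rho j M i.+2)) = \prod_(j <= k < M.-1) t k.
  apply: eq_big_nat => k hk; rewrite /t /rho.
  have -> : (k.+1 < j)%N = false by lia.
  have -> : (k.+1 == j) = false by lia.
  have -> : (k.+1 <= M)%N by lia.
  have -> : (k.+2 < j)%N = false by lia.
  have -> : (k.+2 == j) = false by lia.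
  by have -> : (k.+2 <= M)%N by lia.
rewrite eA eB.
have e1 : rho j M j.-1 = j.-1 by rewrite /rho; do ![case: ifP]; lia.
have e2 : rho j M j = M by rewrite /rho ltnn eqxx.
have e3 : rho j M j.+1 = j.
  by rewrite /rho; do ![case: ifP]; lia.
rewrite e1 e2 e3.
have hA := @prod_t_neq0 0 j.-1 ltac:(lia).
have hB := @prod_t_neq0 j M.-1 ltac:(lia).
have hu : y j.-1 - y M != 0 by apply: yneq; lia.
have hv : y j - y M != 0 by apply: yneq; lia.
have huv : y j.-1 - y j != 0 by apply: yneq; lia.
rewrite /t; move: hA hB; rewrite /t => hA hB.
have hj : j.-1.+1 = j by lia.
rewrite hj.
set A := \prod_(0 <= k < j.-1) _ in hA *.
set B := \prod_(j <= k < M.-1) _ in hB *.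
set u := y j.-1 in hu huv *; set v := y j in hv huv *; set z := y M in hu hv *.
have hzv : z - v != 0 by rewrite -opprB oppr_eq0.
have hd : u - z - (v - z) != 0 by rewrite opprB addrA subrK.
field.
rewrite hv hu /=; have -> : v - z + -1 * (u - z) = -(u - v) by ring.
by rewrite oppr_eq0.
Qed.

Lemma fieldL :
  \sum_(0 <= i < M) (F i.+1 - F i) / (y i - y M) / PP
  = \sum_(0 <= j < M.+1) F j / Q j.
Proof.
have -> : \sum_(0 <= j < M.+1) F j / Q j = \sum_(0 <= j < M.+1) F j * cc j / PP.
  apply: eq_big_nat => j hj; rewrite Q_eq; last by lia.
  rewrite invf_div mulrA //.
rewrite -!mulr_suml; congr (_ * _).
rewrite /cc.
have -> : \sum_(0 <= j < M.+1) F j * ((if (0 < j)%N then bb j.-1 else 0) - (if (j < M)%N then bb j else 0))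
   = \sum_(0 <= j < M.+1) F j * (if (0 < j)%N then bb j.-1 else 0)
     - \sum_(0 <= j < M.+1) F j * (if (j < M)%N then bb j else 0).
  by rewrite -sumrB; apply: eq_bigr => j _; rewrite mulrBr.
rewrite [X in X - _]big_nat_recl // [X in _ - X]big_nat_recr //= ltnn !mulr0 add0r addr0.
have -> : \sum_(0 <= i < M) (F i.+1 - F i) / (y i - y M) =
  \sum_(0 <= i < M) F i.+1 * bb i - \sum_(0 <= i < M) F i * bb i.
  by rewrite -sumrB; apply: eq_bigr => i _; rewrite /bb mulrBl.
congr (_ - _); apply: eq_big_nat => i hi.
by have -> : (i < M)%N by lia.
Qed.

End FieldLemma.

Lemma rho_inj j M a b : (j <= M)%N -> rho j M a = rho j M b -> a = b.
Proof. move=> h; rewrite /rho; do ![case: ifP]; lia. Qed.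

Section Perms.
Context (n : nat).
Local Notation P := {mpoly int[n]}.

Lemma X_neq (a b : 'I_n) : a != b -> ('X_a : P) - 'X_b != 0.
Proof.
move=> ab; apply/eqP => /(congr1 (meval (fun i => (i == a)%:R))).
rewrite mevalB !mevalXU eqxx (negbTE (b := b == a)) ?(eq_sym b) // meval0.
by rewrite subr0 => /eqP; rewrite oner_eq0.
Qed.

Lemma xv_neq a b : (0 < a <= n)%N -> (0 < b <= n)%N -> a != b -> xv n a - xv n b != 0.
Proof.
case: a => // a; case: b => // b /= ha hb ab.
have -> : xv n a.+1 = 'X_(Ordinal ha) := xv_ord (Ordinal ha).
have -> : xv n b.+1 = 'X_(Ordinal hb) := xv_ord (Ordinal hb).
apply: X_neq.
by apply/eqP => -[] e; move: ab; rewrite e eqxx.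
Qed.

Definition sfn (s : 'S_n) (p : nat) : nat :=
  if p is q.+1 then (if (insub q : option 'I_n) is Some i then (val (s i)).+1 else 0%N)
  else 0%N.

Lemma sfn_le s p : (sfn s p <= n)%N.
Proof. by case: p => [|q] //=; case: insub => // i /=; apply: ltn_ord. Qed.

Lemma sfn_ord s (j : 'I_n) : sfn s (val j).+1 = (val (s j)).+1.
Proof. by rewrite /= valK. Qed.

Lemma perm_sub (s : 'S_n) (g : P) : g \mPo [tuple 'X_(s j) | j < n] = sub (sfn s) g.
Proof.
rewrite /sub /substP; congr (_ \mPo _); apply: eq_from_tnth => j.
by rewrite !tnth_mktuple sfn_ord xv_ord.
Qed.

Lemma xs_sfn s k : xs s k = xv n (sfn s k.+1).
Proof. by rewrite /xs /=; case: insub => [i|]; rewrite ?xv_ord ?xv0. Qed.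

Definition fixn (m : nat) (s : 'S_n) : bool :=
  [forall i : 'I_n, (m <= i)%N ==> (s i == i)].

Definition Dm (m : nat) (g : P) : {fraction P} :=
  \sum_(s : 'S_n | fixn m s)
     (g \mPo [tuple 'X_(s j) | j < n])%:F
     / (\prod_(0 <= k < m.-1) (xs s k - xs s k.+1))%:F.

Lemma Dm_n (f : P) : dsym f = Dm n f.
Proof.
apply: eq_bigl => s; symmetry; apply/forallP => i; apply/implyP => h.
by move: (ltn_ord i); rewrite ltnNge h.
Qed.

Lemma Dm_1 (g : P) : Dm 1 g = g%:F.
Proof.
rewrite /Dm (big_pred1 (1%g : 'S_n)).
  rewrite big_geq // divr1; congr (_%:F).
  rewrite -[RHS]comp_mpoly_id; congr (_ \mPo _).
  by apply: eq_from_tnth => j; rewrite !tnth_mktuple perm1.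
move=> s /=; apply/idP/eqP => [/forallP h|->].
  apply/permP => i; rewrite perm1.
  case: (posnP i) => [i0|ip]; last by apply/eqP; move: (h i); rewrite ip.
  apply/eqP; apply/negPn/negP => ne.
  have hsi : (1 <= s i)%N by rewrite lt0n -i0; apply: contra ne => /eqP e; apply/eqP/val_inj; rewrite /= e i0.
  have := h (s i); rewrite hsi /= => /eqP /perm_inj e.
  by move: ne; rewrite e eqxx.
by apply/forallP => i; rewrite perm1 eqxx implybT.
Qed.

Definition rfun (M j : nat) (x : 'I_n) : 'I_n :=
  if (j <= M)%N && (M < n)%N then insubd x (rho j M x) else x.

Lemma rho_lt j M x : (M < n)%N -> (x < n)%N -> (rho j M x < n)%N.
Proof. by move=> h1 h2; rewrite /rho; do ![case: ifP]; lia. Qed.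

Lemma rfun_val M j x : (j <= M)%N -> (M < n)%N -> val (rfun M j x) = rho j M x.
Proof.
move=> h1 h2; rewrite /rfun h1 h2 /= val_insubd.
by rewrite rho_lt // ltn_ord.
Qed.

Lemma rfun_inj M j : injective (rfun M j).
Proof.
move=> x y; case h: ((j <= M)%N && (M < n)%N); last by rewrite /rfun h.
move/andP: h => [h1 h2] /(congr1 val); rewrite !rfun_val //.
by move/(rho_inj h1)/val_inj.
Qed.

Definition rperm M j : 'S_n := perm (@rfun_inj M j).

Lemma rperm_val M j x : (j <= M)%N -> (M < n)%N -> val (rperm M j x) = rho j M x.
Proof. by move=> h1 h2; rewrite permE rfun_val. Qed.

Lemma sfn_rperm M j (s : 'S_n) p : (j <= M)%N -> (M < n)%N -> (0 < p <= n)%N ->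
  sfn (rperm M j * s) p = sfn s (rho j.+1 M.+1 p).
Proof.
move=> h1 h2; case: p => // p /= hp.
rewrite (insubT (fun x => x < n)%N hp) /= permM.
have e : rho j.+1 M.+1 p.+1 = (rho j M p).+1 by rewrite /rho; do ![case: ifP]; lia.
rewrite e /= -(rperm_val (Ordinal hp) h1 h2).
by rewrite valK.
Qed.

End Perms.
Arguments rperm {n} M j.

Section Step.
Context (n : nat).
Local Notation P := {mpoly int[n]}.

Lemma invperm_eq (s : 'S_n) a b : ((s^-1)%g a == b) = (a == s b).
Proof. by apply/eqP/eqP => [<-|->]; rewrite ?permKV ?permK. Qed.

Lemma cond_eq M (j : 'I_n) (tau : 'S_n) (hM : (M < n)%N) : (j <= M)%N ->
  fixn M.+1 (rperm M j * tau) && (((rperm M j * tau)^-1)%g (Ordinal hM) == j)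
  = fixn M tau.
Proof.
move=> jM.
have e1 : forall x : 'I_n, (M < x)%N -> rperm M j x = x.
  move=> [x xl] hx; apply: val_inj; rewrite rperm_val //= /rho.
  by move: hx => /= hx; do ![case: ifP]; lia.
have e2 : rperm M j j = Ordinal hM.
  by apply: val_inj; rewrite rperm_val //= /rho ltnn eqxx.
rewrite invperm_eq permM e2.
apply/andP/forallP => [[/forallP hf hinv] x|h].
  apply/implyP => hx; have [xe|xne] := eqVneq (x : nat) M.
    have -> : x = Ordinal hM by apply: val_inj.
    by rewrite eq_sym.
  have hx' : (M < x)%N by lia.
  by move: (hf x); rewrite hx' permM e1.
split.
  apply/forallP => x; apply/implyP => hx; rewrite permM e1 //.
  by move: (h x) => /implyP; apply; lia.
by move: (h (Ordinal hM)) => /implyP; rewrite eq_sym; apply => /=.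
Qed.

Lemma per_tau m (f : P) (tau : 'S_n) : (2 <= m)%N -> (m <= n)%N ->
  \sum_(j : 'I_n | (j < m)%N)
     (f \mPo [tuple 'X_((rperm m.-1 j * tau)%g i) | i < n])%:F
     / (\prod_(0 <= k < m.-1) (xs (rperm m.-1 j * tau)%g k - xs (rperm m.-1 j * tau)%g k.+1))%:F
  = (Tsum m f \mPo [tuple 'X_(tau i) | i < n])%:F
     / (\prod_(0 <= k < m.-1.-1) (xs tau k - xs tau k.+1))%:F.
Proof.
move=> m2 mn.
set M := m.-1.
have Mm : m = M.+1 by rewrite /M; lia.
have hM : (M < n)%N by lia.
have M0 : (0 < M)%N by lia.
rewrite -(big_ord_widen _ (fun j : nat => (f \mPo [tuple 'X_((rperm m.-1 j * tau)%g i) | i < n])%:F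
     / (\prod_(0 <= k < m.-1) (xs (rperm m.-1 j * tau)%g k - xs (rperm m.-1 j * tau)%g k.+1))%:F) mn).
set t := sfn tau.
set y := fun k => (xv n (t k.+1))%:F.
set F := fun j => (sub t (Rop j.+1 m f))%:F.
have yinj : forall a b, (a <= M)%N -> (b <= M)%N -> a != b -> y a != y b.
  move=> a b ha hb ab; rewrite /y tofrac_eq -subr_eq0.
  have ha' : (a < n)%N by lia.
  have hb' : (b < n)%N by lia.
  rewrite /t -[a]/(val (Ordinal ha')) -[b]/(val (Ordinal hb')) !sfn_ord !xv_ord.
  apply: X_neq; apply: contra ab => /eqP /perm_inj /(congr1 val) /= ->.
  by [].
have := @fieldL _ M y F M0 yinj.
rewrite /PP /Q /t.
rewrite -Mm => fl.
transitivity (\sum_(0 <= j < m) F j / \prod_(0 <= k < M) (y (rho j M k) - y (rho j M k.+1))).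
  rewrite big_mkord; apply: eq_bigr => -[j hj] _ /=.
  have jM : (j <= M)%N by lia.
  congr (_ / _).
    rewrite perm_sub /F; congr (_%:F).
    rewrite (@sub_ext _ _ (fun p => t (rho j.+1 m p))); last first.
      by move=> p hp; rewrite /t Mm sfn_rperm.
    rewrite -sub_comp ?Rop_sub //.
    by move=> p hp; rewrite /rho; do ![case: ifP]; lia.
  rewrite rmorph_prod /= -/M; apply: eq_big_nat => k hk.
  rewrite rmorphB /= !xs_sfn /y.
  rewrite !sfn_rperm //; try lia.
  have e : forall q, rho j.+1 M.+1 q.+1 = (rho j M q).+1.
    by move=> q; rewrite /rho; do ![case: ifP]; lia.
  by rewrite !e.
rewrite -fl.
rewrite /Tsum perm_sub sub_sum rmorph_sum /= mulr_suml big_add1 /= -/M.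
have -> : M.-1 = m.-1.-1 by [].
apply: eq_big_nat => i hi.
have hden : (\prod_(0 <= k < m.-1.-1) (xs tau k - xs tau k.+1))%:F
          = \prod_(0 <= k < M.-1) (y k - y k.+1).
  rewrite rmorph_prod; apply: eq_big_nat => k hk.
  by rewrite rmorphB /= !xs_sfn.
rewrite hden; congr (_ / _).
have hyi : y i - y M != 0 by rewrite subr_eq0 yinj //; lia.
apply: (mulIf hyi); rewrite divfK //.
have := Top_spec f (i := i.+1) (m := m) ltac:(lia) ltac:(lia) mn.
move/(congr1 (sub t)); rewrite subM !subB sub_xv ?sub_xv; try lia.
move/(congr1 (fun x => x%:F)); rewrite rmorphM !rmorphB /=.
by rewrite /F /y Mm.
Qed.

Lemma Dm_step m (f : P) : (2 <= m)%N -> (m <= n)%N -> Dm m f = Dm m.-1 (Tsum m f).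
Proof.
move=> m2 mn.
set M := m.-1.
have Mm : m = M.+1 by rewrite /M; lia.
have hM : (M < n)%N by lia.
rewrite /Dm.
rewrite (partition_big (fun s : 'S_n => ((s^-1)%g (Ordinal hM))) (fun j : 'I_n => (j < m)%N)) /=; last first.
  move=> s /forallP hs; rewrite ltnNge; apply/negP => hle.
  move: (hs ((s^-1)%g (Ordinal hM))); rewrite hle /= permKV => /eqP /(congr1 val) /= e.
  by move: hle; rewrite -e Mm ltnn.
transitivity (\sum_(j : 'I_n | (j < m)%N) \sum_(tau : 'S_n | fixn M tau)
     (f \mPo [tuple 'X_((rperm M j * tau)%g i) | i < n])%:F
     / (\prod_(0 <= k < m.-1) (xs (rperm M j * tau)%g k - xs (rperm M j * tau)%g k.+1))%:F).
  apply: eq_bigr => j hj.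
  rewrite (reindex_inj (mulgI (rperm M j))) /=.
  apply: eq_bigl => tau; rewrite Mm cond_eq //; lia.
rewrite exchange_big /=; apply: eq_bigr => tau _.
exact: per_tau.
Qed.

End Step.

Section Msize.
Context (n : nat).
Local Notation P := {mpoly int[n]}.

Lemma msizeM_le2 (p q : P) : (msize (p * q) <= (msize p + msize q).-1)%N.
Proof.
have [->|p0] := eqVneq p 0; first by rewrite mul0r msize0.
have [->|q0] := eqVneq q 0; first by rewrite mulr0 msize0.
by rewrite msizeM.
Qed.

Lemma msize_prod_le (I : Type) (r : seq I) (Q : pred I) (F : I -> P) (d : I -> nat) :
  (forall i, msize (F i) <= (d i).+1)%N ->
  (msize (\prod_(i <- r | Q i) F i) <= (\sum_(i <- r | Q i) d i).+1)%N.
Proof.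
move=> h; apply: (big_rec2 (fun x y => msize x <= y.+1)%N).
  by rewrite msize1.
move=> i y x _ hx; apply: (leq_trans (msizeM_le2 _ _)).
have := h i; lia.
Qed.

Lemma msize_exp_le (a : P) e : (msize a <= 2)%N -> (msize (a ^+ e) <= e.+1)%N.
Proof.
move=> ha; elim: e => [|e ih]; first by rewrite expr0 msize1.
rewrite exprS; apply: (leq_trans (msizeM_le2 _ _)); lia.
Qed.

Lemma msize_comp_le (p : P) (lq : n.-tuple P) :
  (forall i, msize (tnth lq i) <= 2)%N -> (msize (p \mPo lq) <= msize p)%N.
Proof.
move=> h; rewrite comp_mpolyE big_seq.
apply: (big_ind (fun x => msize x <= msize p)%N).
- by rewrite msize0.
- move=> x y hx hy; apply: (leq_trans (msizeD_le _ _)); by rewrite geq_max hx hy.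
move=> m hm; apply: (leq_trans (msizeZ_le _ _)).
apply: (leq_trans (msize_prod_le _ _ (d := fun i => m i) _)).
  by move=> i; apply: msize_exp_le.
by rewrite -mdegE; apply: msize_mdeg_lt.
Qed.

Lemma msize_xv p : (msize (xv n p) <= 2)%N.
Proof.
rewrite /xv; case: ifP => _; last by rewrite msize0.
case: insub => [i|]; last by rewrite msize0.
by rewrite msizeX mdeg1.
Qed.

Lemma msize_sub (k : nat -> nat) (g : P) : (msize (sub k g) <= msize g)%N.
Proof. by apply: msize_comp_le => i; rewrite tnth_mktuple msize_xv. Qed.

Lemma msize_nonconst (a b : 'I_n) : a != b -> (2 <= msize ('X_a - 'X_b : P))%N.
Proof.
move=> ab; rewrite ltnNge; apply/negP => /msize1_polyC e.
have h1 := congr1 (meval (fun i => (i == a)%:R)) e.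
have h0 := congr1 (meval (fun i => 0)) e.
move: h1 h0; rewrite !mevalC !mevalB !mevalXU eqxx (negbTE (b := b == a)) ?(eq_sym b) //.
by rewrite subr0 subrr => <-.
Qed.

Lemma msize_Top i m (g : P) : (0 < i)%N -> (i < m)%N -> (m <= n)%N ->
  (msize (Top i m g) <= (msize g).-1)%N.
Proof.
move=> i0 im mn.
have hq : (2 <= msize (xv n i - xv n m))%N.
  case: i i0 im => // i _ im; case: m im mn => // m im mn.
  have hi : (i < n)%N by lia.
  have hm : (m < n)%N by lia.
  have -> : xv n i.+1 = 'X_(Ordinal hi) := xv_ord (Ordinal hi).
  have -> : xv n m.+1 = 'X_(Ordinal hm) := xv_ord (Ordinal hm).
  apply: msize_nonconst; apply/eqP => -[] e; lia.
have := Top_spec g i0 im mn.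
have [->|t0] := eqVneq (Top i m g) 0; first by rewrite msize0.
have q0 : xv n i - xv n m != 0 by apply/eqP => e; move: hq; rewrite e msize0.
move/(congr1 (fun x => msize x)); rewrite msizeM // => e.
have : (msize (Rop i.+1 m g - Rop i m g) <= msize g)%N.
  apply: (leq_trans (msizeD_le _ _)); rewrite msizeN geq_max !Rop_sub !msize_sub //.
move: e hq; set T := msize (Top i m g); set Q := msize (xv n i - xv n m).
set R := msize (Rop i.+1 m g - Rop i m g); set G := msize g.
move=> e hq h; lia.
Qed.

Lemma msize_Tsum m (g : P) : (m <= n)%N -> (msize (Tsum m g) <= (msize g).-1)%N.
Proof.
move=> mn; rewrite /Tsum big_nat_cond.
apply: (big_ind (fun x => msize x <= (msize g).-1)%N).
- by rewrite msize0.
- move=> x y hx hy; apply: (leq_trans (msizeD_le _ _)); by rewrite geq_max hx hy.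
move=> i /andP [/andP [h1 h2] _]; apply: msize_Top => //; lia.
Qed.

Lemma msize_chain (f : P) a k : (2 <= a)%N -> (a + k <= n.+1)%N ->
  (msize (foldr (fun m g => Tsum m g) f (iota a k)) <= msize f - k)%N.
Proof.
elim: k a => [|k ih] a a2 hk /=; first by rewrite subn0.
apply: (leq_trans (msize_Tsum _ _)); first lia.
have := ih a.+1 ltac:(lia) ltac:(lia); lia.
Qed.

End Msize.

Section Zsec.
Context (n : nat).
Local Notation P := {mpoly int[n]}.

Lemma xv_neq0 p : (0 < p <= n)%N -> xv n p != 0.
Proof.
case: p => // p /= hp; have -> : xv n p.+1 = 'X_(Ordinal hp) := xv_ord (Ordinal hp).
by rewrite -msize_poly_eq0 msizeX mdeg1.
Qed.

Lemma Z_Top i m (f : P) : (0 < i)%N -> (i < m)%N -> (m <= n)%N ->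
  sub (zeta m) (Top i m f) = T0op i f.
Proof.
move=> i0 im mn.
have := Top_spec f i0 im mn.
move/(congr1 (sub (zeta m))); rewrite subM !subB !sub_xv; try lia.
have -> : zeta m i = i by rewrite /zeta im.
have -> : zeta m m = 0%N by rewrite /zeta ltnn eqxx.
rewrite xv0 subr0 !Rop_sub !sub_comp; first last.
- by move=> p hp; rewrite /rho; do ![case: ifP]; lia.
- by rewrite /zeta; case: ifP => //; lia.
- by move=> p hp; rewrite /rho; do ![case: ifP]; lia.
- by rewrite /zeta; case: ifP => //; lia.
rewrite (@sub_ext _ (fun p => zeta m (rho i.+1 m p)) (zeta i.+1)); last first.
  by move=> p _; rewrite /zeta /rho; do ![case: ifP]; lia.
rewrite (@sub_ext _ (fun p => zeta m (rho i m p)) (zeta i)); last first.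
  by move=> p _; rewrite /zeta /rho; do ![case: ifP]; lia.
rewrite -!R0op_sub => e.
have spec : T0op i f * xv n i = R0op i.+1 f - R0op i f.
  rewrite /T0op /exdiv.
  apply: (epsilon_spec (inhabits 0) (fun g => g * _ = _)).
  by exists (R0op m (Top i m f)).
apply: (mulIf (xv_neq0 (p := i) ltac:(lia))).
by rewrite spec e.
Qed.

Lemma Z_Top2 i m' m (g : P) : (0 < i)%N -> (i < m')%N -> (m' < m)%N -> (m <= n)%N ->
  sub (zeta m) (Top i m' g) = Top i m' (sub (zeta m) g).
Proof.
move=> i0 im' m'm mn.
have hq : xv n i - xv n m' != 0 by apply: xv_neq; lia.
apply: (mulIf hq).
rewrite Top_spec; try lia.
have := Top_spec g i0 im' ltac:(lia).
move/(congr1 (sub (zeta m))); rewrite subM !subB !sub_xv; try lia.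
have -> : zeta m i = i by rewrite /zeta; case: ifP => //; lia.
have -> : zeta m m' = m' by rewrite /zeta m'm.
move=> ->; rewrite !Rop_sub !sub_comp.
all: try (by move=> p hp; unfold rho, zeta; do ![case: ifP]; lia).
all: try (by unfold rho, zeta; do ![case: ifP]; lia).
all: try (by rewrite /rho /=).
congr (_ - _); apply: sub_ext => p _; rewrite /zeta /rho; do ![case: ifP]; lia.
Qed.

Lemma Z_Tsum1 m (g : P) : (2 <= m)%N -> (m <= n)%N ->
  sub (zeta m) (Tsum m g) = T0sum m.-1 g.
Proof.
move=> m2 mn; rewrite /Tsum /T0sum sub_sum prednK; last by lia.
by apply: eq_big_nat => i hi; apply: Z_Top; lia.
Qed.

Lemma Z_Tsum2 m' m (g : P) : (m' < m)%N -> (m <= n)%N ->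
  sub (zeta m) (Tsum m' g) = Tsum m' (sub (zeta m) g).
Proof.
move=> m'm mn; rewrite /Tsum sub_sum.
by apply: eq_big_nat => i hi; apply: Z_Top2; lia.
Qed.

Lemma Z_foldr m (g : P) (L : seq nat) : (m <= n)%N -> all (fun k => k < m)%N L ->
  sub (zeta m) (foldr (fun k h => Tsum k h) g L) = foldr (fun k h => Tsum k h) (sub (zeta m) g) L.
Proof.
move=> mn; elim: L => //= k L ih /andP [hk hL].
by rewrite Z_Tsum2 // ih.
Qed.

Definition Amix (f : P) (a : nat) : P :=
  foldr (fun m g => Tsum m g) (foldr (fun k g => T0sum k g) f (iota a (n - a))) (iota 2 a.-1).

Lemma A_step (f : P) a : (2 <= a)%N -> (a <= n)%N -> sub (zeta a) (Amix f a) = Amix f a.-1.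
Proof.
move=> a2 an; rewrite /Amix.
have -> : iota 2 a.-1 = iota 2 a.-2 ++ iota (2 + a.-2) 1.
  by rewrite -iotaD; congr iota; lia.
have -> : (2 + a.-2)%N = a by lia.
rewrite foldr_cat /= Z_foldr //; last first.
  by apply/allP => k; rewrite mem_iota => /andP [h1 h2]; lia.
rewrite Z_Tsum1 //.
have -> : (n - a.-1)%N = (n - a).+1 by lia.
rewrite /= prednK; last by lia.
by [].
Qed.

End Zsec.

Lemma chain1 n (f : {mpoly int[n]}) : dsym f = (Tchain f)%:F.
Proof.
case: n f => [|n] f.
  rewrite Dm_n /Tchain /= -(Dm_1 f); apply: eq_bigl => s.
  by apply/idP/idP => _; apply/forallP => -[].
rewrite Dm_n.
suff h : forall k, (k <= n)%N ->
  Dm n.+1 f = Dm (n.+1 - k) (foldr (fun m g => Tsum m g) f (iota (n.+1 - k).+1 k)).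
  have := h n (leqnn n); rewrite subSnn => ->; rewrite Dm_1 /Tchain /=.
  by [].
elim=> [|k ih] hk; first by rewrite subn0.
rewrite ih; last by lia.
have -> : (n.+1 - k)%N = (n.+1 - k.+1).+1 by lia.
rewrite Dm_step; [|lia|lia].
by [].
Qed.

Theorem mainTheorem15 (n : nat) (f : {mpoly int[n]}) :
  dsym f = (Tchain f)%:F /\
  ((0 < n)%N -> f \is ishomog1 n.-1 mdeg -> dsym f = (T0chain f)%:F).
Proof.
split; first exact: chain1.
move=> n0 hom; rewrite chain1; congr (_%:F).
have hf : (msize f <= n)%N.
  rewrite msizeE big_seq; apply: (big_ind (fun x => x <= n)%N) => //.
    by move=> x y hx hy; rewrite geq_max hx hy.
  move=> m hm; move: hom; rewrite qualifE /= => /allP /(_ m hm) /= /eqP ->.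
  by rewrite prednK.
have hc : (msize (Tchain f) <= 1)%N.
  rewrite /Tchain; apply: (leq_trans (msize_chain f (a := 2) (k := n.-1) _ _)); lia.
have ec := msize1_polyC hc.
suff : forall k, (k <= n.-1)%N -> Amix f (n - k) = Tchain f.
  move/(_ n.-1 (leqnn _)); have -> : (n - n.-1)%N = 1%N by lia.
  by rewrite /Amix /T0chain /= subn1 => <-.
elim => [|k ih] hk.
  by rewrite subn0 /Amix subnn.
have := A_step f (a := n - k) ltac:(lia) ltac:(lia).
rewrite ih; last by lia.
have -> : (n - k).-1 = (n - k.+1)%N by lia.
by rewrite [in LHS]ec subC -ec => <-.
Qed.
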